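(* Let $K\subset\mathbb{R}^n$ and $C\subset\mathbb{R}^m$ be nonempty, convex, closed and bounded sets, and let $f,h:\mathbb{R}^n\times\mathbb{R}^m\to\mathbb{R}$ be continuous functions such that, for every $y\in K$, $f(y,\cdot)$ and $h(y,\cdot)$ are convex, and such that $f$ takes only positive values. Let $\varepsilon>0$, let $y_\varepsilon$ be an optimal solution of $(\mathcal{P}_\varepsilon)$, let $y^*$ be an optimal solution of $(\widetilde{\mathcal{P}})$, let $x^*\in\mathcal{S}(y^* )$, and let $\tilde x_\varepsilon\in\mathcal{S}_\varepsilon(y^* )$. Then for every $x_\varepsilon\in\mathcal{S}_\varepsilon(y_\varepsilon)$, $$f(y^*,\tilde x_\varepsilon)\le f(y_\varepsilon,x_\varepsilon)\le f(y^*,x^* ).$$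
   Context: $f^2=(f)^2$. For $y\in K$: $\mathcal{S}(y)=\operatorname{argmin}\{h(y,z)\mid z\in C\}$; for $\varepsilon>0$, $\mathcal{S}_\varepsilon(y)=\operatorname{argmin}\{h(y,z)+\varepsilon f^2(y,z)\mid z\in C\}$; $\widetilde{\mathcal{S}}(y)=\operatorname{argmin}\{f^2(y,z)\mid z\in\mathcal{S}(y)\}$. $(\mathcal{P}_\varepsilon)$: maximize $f(y,x)$ over $y\in K$, $x\in\mathcal{S}_\varepsilon(y)$; $y_\varepsilon\in K$ is optimal if $f(y_\varepsilon,x')\ge f(y,x)$ for all $x'\in\mathcal{S}_\varepsilon(y_\varepsilon)$, $y\in K$, $x\in\mathcal{S}_\varepsilon(y)$. $(\widetilde{\mathcal{P}})$: maximize $f(y,x)$ over $y\in K$, $x\in\widetilde{\mathcal{S}}(y)$; $y^*\in K$ is optimal if $f(y^*,x')\ge f(y,x)$ for all $x'\in\widetilde{\mathcal{S}}(y^* )$, $y\in K$, $x\in\widetilde{\mathcal{S}}(y)$. *)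

(* Defs.v *)
From mathcomp Require Import all_boot all_order all_algebra.
From mathcomp Require Import all_classical all_reals all_analysis.
Set Implicit Arguments. Unset Strict Implicit. Unset Printing Implicit Defensive.
Import Order.TTheory GRing.Theory Num.Theory.
Import numFieldNormedType.Exports.
Local Open Scope classical_set_scope.
Local Open Scope ring_scope.

Definition argmin_set (T : Type) (R : realType) (g : T -> R) (D : set T) : set T :=
  [set z | D z /\ forall z', D z' -> g z <= g z'].

Section Bilevel.
Variables (R : realType) (n m : nat).
Variables (K : set 'rV[R]_n) (C : set 'rV[R]_m).
Variables (f h : 'rV[R]_n * 'rV[R]_m -> R).

Definition Ssol (y : 'rV[R]_n) : set 'rV[R]_m := argmin_set (fun z => h (y, z)) C.

Definition Seps (eps : R) (y : 'rV[R]_n) : set 'rV[R]_m :=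
  argmin_set (fun z => h (y, z) + eps * (f (y, z)) ^+ 2) C.

Definition Stilde (y : 'rV[R]_n) : set 'rV[R]_m :=
  argmin_set (fun z => (f (y, z)) ^+ 2) (Ssol y).

Definition optimal_Peps (eps : R) (ye : 'rV[R]_n) : Prop :=
  K ye /\ forall x' y x, Seps eps ye x' -> K y -> Seps eps y x -> f (y, x) <= f (ye, x').

Definition optimal_Ptilde (ys : 'rV[R]_n) : Prop :=
  K ys /\ forall x' y x, Stilde ys x' -> K y -> Stilde y x -> f (y, x) <= f (ys, x').
End Bilevel.

(* Main.v *)
Require Import Defs.
From mathcomp Require Import all_boot all_order all_algebra.
From mathcomp Require Import all_classical all_reals all_analysis.
Import Order.TTheory GRing.Theory Num.Theory.
Import numFieldNormedType.Exports.
Local Open Scope classical_set_scope.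
Local Open Scope ring_scope.

Lemma argmin_ex (R : realType) m (A : set 'rV[R]_m) (g : 'rV[R]_m -> R) :
  A !=set0 -> compact A -> continuous g ->
  exists c, argmin_set g A c.
Proof.
move=> A0 cA cg.
have [c cA' cmin] := compact_EVT_min A0 cA (continuous_subspaceT cg).
exists c; split; first by move: cA'; rewrite inE.
by move=> z Az; apply: cmin; rewrite inE.
Qed.

Lemma argmin_compact (R : realType) m (A : set 'rV[R]_m) (g : 'rV[R]_m -> R) :
  A !=set0 -> compact A -> continuous g ->
  compact (argmin_set g A).
Proof.
move=> A0 cA cg.
have [c [Ac cmin]] := @argmin_ex R m A g A0 cA cg.
have -> : argmin_set g A = A `&` (g @^-1` [set r | r <= g c]).
  apply/seteqP; split => z /=.
    by move=> [Az zmin]; split => //; apply: zmin.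
  move=> [Az gz]; split => // z' Az'; exact: le_trans gz (cmin _ Az').
apply: compact_closedI => //.
by move/continuous_closedP: cg; apply; exact: closed_le.
Qed.

Lemma contsec (R : realType) n m (F : 'rV[R]_n * 'rV[R]_m -> R) y :
  continuous F -> continuous (fun z => F (y, z)).
Proof.
move=> Fc z.
apply: (@continuous_comp _ _ _ (fun z : 'rV[R]_m => (y, z)) F).
  apply: (@cvg_pair _ _ _ (nbhs z) (nbhs y) (nbhs z) _ _ _ (fun=> y) id).
    exact: cvg_cst.
  exact: cvg_id.
exact: Fc.
Qed.
From mathcomp Require Import lra.
Arguments argmin_ex {R m A g}.
Arguments argmin_compact {R m A g}.

Lemma contsq (R : realType) n m (F : 'rV[R]_n * 'rV[R]_m -> R) y :
  continuous F -> continuous (fun z => F (y, z) ^+ 2).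
Proof.
move=> Fc.
have -> : (fun z => F (y, z) ^+ 2) = (fun z => F (y, z) * F (y, z)).
  by apply: funext => z; rewrite expr2.
move=> z; exact: (cvgM (contsec _ _ _ _ y Fc z) (contsec _ _ _ _ y Fc z)).
Qed.

Lemma penalty (R : realType) n m (C : set 'rV[R]_m)
  (f h : 'rV[R]_n * 'rV[R]_m -> R) (fpos : forall p, 0 < f p)
  (eps : R) (eps_gt0 : 0 < eps) y x x' :
  Seps C f h eps y x -> Ssol C h y x' -> f (y, x) <= f (y, x').
Proof.
move=> [Cx xmin] [Cx' x'min].
have h1 := x'min _ Cx.
have h2 := xmin _ Cx'.
have h3 : eps * f (y, x) ^+ 2 <= eps * f (y, x') ^+ 2 by lra.
rewrite ler_pM2l // in h3.
have p1 := fpos (y, x); have p2 := fpos (y, x').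
rewrite !expr2 in h3; nra.
Qed.

Arguments contsec {R n m F} y.
Arguments contsq {R n m F} y.
Arguments penalty {R n m C f h} fpos {eps} eps_gt0 {y x x'}.

Theorem lemma4p3 (R : realType) (n m : nat)
  (K : set 'rV[R]_n) (C : set 'rV[R]_m)
  (f h : 'rV[R]_n * 'rV[R]_m -> R)
  (K0 : K !=set0) (Kcvx : convex_set K) (Kcl : closed K) (Kbd : bounded_set K)
  (C0 : C !=set0) (Ccvx : convex_set C) (Ccl : closed C) (Cbd : bounded_set C)
  (fcont : continuous f) (hcont : continuous h)
  (fcvx : forall y, K y -> convex_function setT (fun z : 'rV[R]_m => f (y, z)))
  (hcvx : forall y, K y -> convex_function setT (fun z : 'rV[R]_m => h (y, z)))
  (fpos : forall p, 0 < f p)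
  (eps : R) (eps_gt0 : 0 < eps)
  (ye ys : 'rV[R]_n) (xs xte : 'rV[R]_m)
  (hye : optimal_Peps K C f h eps ye)
  (hys : optimal_Ptilde K C f h ys)
  (hxs : Ssol C h ys xs)
  (hxte : Seps C f h eps ys xte) :
  forall xe, Seps C f h eps ye xe ->
    f (ys, xte) <= f (ye, xe) <= f (ys, xs).
Proof.
move=> xe hxe.
have [Kye optye] := hye.
have [Kys optys] := hys.
apply/andP; split; first exact: optye.
have cC : compact C := bounded_closed_compact Cbd Ccl.
have tilde_ex : forall y, exists x, Stilde C f h y x.
  move=> y.
  have [c Sc] := argmin_ex C0 cC (contsec y hcont).
  have SC : compact (Ssol C h y) := argmin_compact C0 cC (contsec y hcont).
  exact: (argmin_ex (ex_intro _ c Sc) SC (contsq y fcont)).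
have [x1 hx1] := tilde_ex ye.
have [x2 hx2] := tilde_ex ys.
have e1 : f (ye, xe) <= f (ye, x1) by apply: (penalty fpos eps_gt0 hxe); case: hx1.
have e2 : f (ye, x1) <= f (ys, x2) by apply: optys.
have e3 : f (ys, x2) <= f (ys, xs).
  have [_ m2] := hx2; have := m2 _ hxs.
  have p1 := fpos (ys, x2); have p2 := fpos (ys, xs).
  rewrite !expr2 => q; nra.
lra.
Qed.
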